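(* Let $\gamma$ be non-decreasing with $\gamma\in L^2(0,1)$, $\int_0^1\gamma=1$ and $\gamma\not\equiv1$. Let $\mu\in\mathbb R$ and $\sigma>0$, and let $c_0=\operatorname{corr}(F^{-1}(U),\gamma(U))<1$. Assume $$(\mu_F-\mu)^2+(\sigma_F-\sigma)^2<\varepsilon\le(\mu_F-\mu)^2+(\sigma_F-\sigma)^2+2\sigma\sigma_F(1-c_0).$$ Put $$K=\tfrac12\big(\mu_F^2+\sigma_F^2+\mu^2+\sigma^2-2\mu\mu_F-\varepsilon\big),\qquad V=\operatorname{var}(\gamma(U)),\qquad C_{\gamma,F}=\operatorname{cov}(F^{-1}(U),\gamma(U)),$$ $$\Delta=\frac{K^2(C_{\gamma,F}^2-V\sigma_F^2)}{K^2-\sigma^2\sigma_F^2}.$$ Then $K\ge0$ and $\Delta\ge0$. Moreover, the unique $\lambda\ge0$ with $$d_W(F^{-1},h_\lambda)^2=\mathbb E\big((F^{-1}(U)-h_\lambda(U))^2\big)=\varepsilon$$ is $$\lambda=\frac{\sqrt\Delta-C_{\gamma,F}}{\sigma_F^2}.$$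
   Context: $U\sim\mathcal U(0,1)$. $F$ is a reference distribution function with finite second moment, mean $\mu_F$, standard deviation $\sigma_F>0$, and quantile function $F^{-1}(u)=\inf\{y:F(y)\ge u\}$. For $\lambda\ge0$, $$h_\lambda(u)=\mu+\sigma\,\frac{\gamma(u)+\lambda F^{-1}(u)-a_\lambda}{b_\lambda},$$ with $a_\lambda=\mathbb E(\gamma(U)+\lambda F^{-1}(U))$ and $b_\lambda=\operatorname{std}(\gamma(U)+\lambda F^{-1}(U))$. $d_W(G_1^{-1},G_2^{-1})=\big(\int_0^1(G_1^{-1}-G_2^{-1})^2\big)^{1/2}$. *)

(* Defs.v *)
From HB Require Import structures.
From mathcomp Require Import all_boot all_order all_algebra.
From mathcomp Require Import all_classical all_reals all_analysis.
Set Implicit Arguments. Unset Strict Implicit. Unset Printing Implicit Defensive.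
Import Order.TTheory GRing.Theory Num.Theory.
Import numFieldNormedType.Exports.
Local Open Scope classical_set_scope.
Local Open Scope ring_scope.

Section Defs.
Variable R : realType.

(* the open unit interval, the support of U ~ U(0,1) *)
Definition I01 : set R := `]0%R, 1%R[.

Definition is_distribution_function (F : R -> R) : Prop :=
  [/\ {homo F : x y / x <= y},
      (forall x0 : R, F x @[x --> x0^'+] --> F x0),
      F x @[x --> -oo] --> (0:R) &
      F x @[x --> +oo] --> (1:R)].

Definition quantile (F : R -> R) (u : R) : R := inf [set y | u <= F y].

Definition L2_01 (f : R -> R) : Prop :=
  measurable_fun I01 f /\
  (\int[@lebesgue_measure R]_(x in I01) ((f x) ^+ 2)%:E < +oo)%E.

Definition EU (f : R -> R) : R := Rintegral (@lebesgue_measure R) I01 f.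
Definition varU (f : R -> R) : R := EU (fun u => (f u - EU f) ^+ 2).
Definition stdU (f : R -> R) : R := Num.sqrt (varU f).
Definition covU (f g : R -> R) : R :=
  EU (fun u => (f u - EU f) * (g u - EU g)).
Definition corrU (f g : R -> R) : R := covU f g / (stdU f * stdU g).

Definition h_lam (gamma Finv : R -> R) (mu sigma lam : R) (u : R) : R :=
  let a := EU (fun v => gamma v + lam * Finv v) in
  let b := stdU (fun v => gamma v + lam * Finv v) in
  mu + sigma * ((gamma u + lam * Finv u - a) / b).

(* Wasserstein-2 distance between quantile functions *)
Definition dW (G1 G2 : R -> R) : R :=
  Num.sqrt (EU (fun u => (G1 u - G2 u) ^+ 2)).

End Defs.

(* Main.v *)
Require Import Defs.
From HB Require Import structures.
From mathcomp Require Import all_boot all_order all_algebra.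
From mathcomp Require Import all_classical all_reals all_analysis.
From mathcomp Require Import ring lra measurable_realfun.
Set Implicit Arguments. Unset Strict Implicit. Unset Printing Implicit Defensive.
Import Order.TTheory GRing.Theory Num.Theory.
Import numFieldNormedType.Exports.
Local Open Scope classical_set_scope.
Local Open Scope ring_scope.

Section Aux.
Variable R : realType.
Local Notation mu := (@lebesgue_measure R).

Lemma quantile_mono (F : R -> R) : is_distribution_function F ->
  forall u v, I01 u -> I01 v -> u <= v -> quantile F u <= quantile F v.
Proof.
case=> Fmono _ F0 F1 u v.
rewrite /I01 /= !in_itv /= => /andP[u0 u1] /andP[v0 v1] uv.
have [M [_ HM]] := cvgr_lt _ F0 _ u0.
have [N [_ HN]] := cvgr_gt _ F1 _ v1.
have lbM : lbound [set y | u <= F y] M.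
  move=> y /= uy; rewrite leNgt; apply/negP => yM.
  by have := HM _ yM; rewrite ltNge uy.
apply: lb_le_inf.
  by exists (N + 1) => /=; apply: ltW; apply: HN; rewrite ltrDl.
move=> y /= vy; apply: ge_inf; first by exists M.
by rewrite /= (le_trans uv vy).
Qed.

Lemma mI01 : measurable (@I01 R).
Proof. exact: measurable_itv. Qed.

Lemma muI01 : mu (@I01 R) = 1%E.
Proof. by rewrite /I01 lebesgue_measure_itv /= lte_fin ltr01 oppr0 adde0. Qed.

Definition Int (f : R -> R) := mu.-integrable (@I01 R) (EFin \o f).

Lemma Int_cst c : Int (fun _ => c).
Proof.
apply/integrableP; split; first exact/measurable_EFinP/measurable_cst.
rewrite (eq_integral (fun _ => (`|c|)%:E)) //.
rewrite integral_cst; last exact: measurable_itv.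
set m := (X in (_ * X)%E). have -> : m = 1%E by exact: muI01.
by rewrite mule1 ltry.
Qed.

Lemma Int_add f g : Int f -> Int g -> Int (fun x => f x + g x).
Proof. move=> Hf Hg; by apply: (integrableD _ Hf Hg); exact: measurable_itv. Qed.

Lemma Int_scale k f : Int f -> Int (fun x => k * f x).
Proof. move=> Hf; by apply: (integrableZl _ k Hf); exact: measurable_itv. Qed.

Lemma EU_cst c : EU (fun _ : R => c) = c.
Proof.
rewrite /EU Rintegral_cst; last exact: measurable_itv.
set m := (X in fine X). have -> : m = 1%E by exact: muI01.
by rewrite mulr1.
Qed.

Lemma EU_add f g : Int f -> Int g -> EU (fun x => f x + g x) = EU f + EU g.
Proof. move=> Hf Hg; by apply: (RintegralD _ Hf Hg); exact: measurable_itv. Qed.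

Lemma EU_scale k f : Int f -> EU (fun x => k * f x) = k * EU f.
Proof. move=> Hf; by rewrite /EU RintegralZl //; exact: measurable_itv. Qed.

Lemma Int_sq f : L2_01 f -> Int (fun x => f x ^+ 2).
Proof.
case=> mf fi; apply/integrableP; split.
  exact/measurable_EFinP/measurable_funX.
under eq_integral => x _ do rewrite /= ger0_norm ?sqr_ge0 //.
exact: fi.
Qed.

Lemma Int_mul f g : L2_01 f -> L2_01 g -> Int (fun x => f x * g x).
Proof.
move=> Hf Hg; have H := Int_add (Int_sq Hf) (Int_sq Hg); rewrite /Int in H *.
eapply le_integrable; last exact: H.
- exact: measurable_itv.
- by apply/measurable_EFinP/measurable_funM; [case: Hf|case: Hg].
move=> x _ /=; rewrite lee_fin normrM [X in _ <= X]ger0_norm ?addr_ge0 ?sqr_ge0 //.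
rewrite -(real_normK (num_real (f x))) -(real_normK (num_real (g x))).
have := normr_ge0 (f x); have := normr_ge0 (g x); nra.
Qed.

Lemma Int_L2 f : L2_01 f -> Int f.
Proof.
move=> Hf; have H := Int_add (Int_cst 1) (Int_sq Hf); rewrite /Int in H *.
eapply le_integrable; last exact: H.
- exact: measurable_itv.
- by apply/measurable_EFinP; case: Hf.
move=> x _ /=; rewrite lee_fin.
rewrite (ger0_norm (x := 1 + _)) ?addr_ge0 ?sqr_ge0 //.
rewrite -(real_normK (num_real (f x))).
have := normr_ge0 (f x); nra.
Qed.
End Aux.
Ltac solve_int := repeat first [ apply Int_add | apply Int_scale | apply Int_cst | apply Int_mul | apply Int_L2 | assumption ].

Lemma EU6 (R : realType) (X G : R -> R) (k0 k1 k2 k3 k4 k5 : R) : L2_01 X -> L2_01 G ->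
 EU (fun u => k0 + k1 * X u + k2 * G u + k3 * (X u * X u) + k4 * (X u * G u) + k5 * (G u * G u))
 = k0 + k1 * EU X + k2 * EU G + k3 * EU (fun u => X u * X u) + k4 * EU (fun u => X u * G u) + k5 * EU (fun u => G u * G u).
Proof.
move=> HX HG.
rewrite !EU_add; try solve_int.
rewrite !EU_scale ?EU_cst; try solve_int. all: done.
Qed.

Lemma EU6' (R : realType) (X G f : R -> R) (k0 k1 k2 k3 k4 k5 : R) : L2_01 X -> L2_01 G ->
 (forall u, f u = k0 + k1 * X u + k2 * G u + k3 * (X u * X u) + k4 * (X u * G u) + k5 * (G u * G u)) ->
 EU f = k0 + k1 * EU X + k2 * EU G + k3 * EU (fun u => X u * X u) + k4 * EU (fun u => X u * G u) + k5 * EU (fun u => G u * G u).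
Proof.
move=> HX HG Hf; rewrite -EU6 //; congr EU; exact: funext.
Qed.

Section Aux2.
Variable R : realType.
Local Notation mu := (@lebesgue_measure R).

Lemma Int_meas (f : R -> R) : Int f -> measurable_fun (@I01 R) f.
Proof. by case/integrableP => /measurable_EFinP. Qed.

Lemma EU_ae (f g : R -> R) : Int f -> Int g ->
  {ae mu, forall x, @I01 R x -> f x = g x} -> EU f = EU g.
Proof.
move=> Hf Hg Hae; rewrite /EU /Rintegral; congr fine.
apply: ae_eq_integral.
- exact: measurable_itv.
- by apply/measurable_EFinP; exact: Int_meas.
- by apply/measurable_EFinP; exact: Int_meas.
- have FF := ae_filter_ringOfSetsType mu.
  by apply: filterS Hae => x H Ix /=; rewrite H.
Qed.

Lemma ae0 (f : R -> R) : Int f -> (forall x, @I01 R x -> 0 <= f x) -> EU f = 0 ->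
  {ae mu, forall x, @I01 R x -> f x = 0}.
Proof.
move=> Hf f0 Ef.
have fin : (\int[mu]_(x in @I01 R) (f x)%:E)%E \is a fin_num.
  by apply: (integrable_fin_num _ Hf); exact: measurable_itv.
have H0 : (\int[mu]_(x in @I01 R) (f x)%:E = 0)%E.
  by rewrite -(fineK fin); congr EFin; exact: Ef.
have : ae_eq mu (@I01 R) (EFin \o f) (cst 0%E).
  apply/ae_eq_integral_abs.
  - exact: measurable_itv.
  - by apply/measurable_EFinP; exact: Int_meas.
  rewrite -H0; apply: eq_integral => x Ix /=.
  by rewrite ger0_norm // f0 //; move: Ix; rewrite inE.
have FF := ae_filter_ringOfSetsType mu.
apply: filterS => x H Ix; by case: (H Ix).
Qed.
End Aux2.

Lemma Int6 (R : realType) (X G f : R -> R) (k0 k1 k2 k3 k4 k5 : R) : L2_01 X -> L2_01 G ->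
 (forall u, f u = k0 + k1 * X u + k2 * G u + k3 * (X u * X u) + k4 * (X u * G u) + k5 * (G u * G u)) ->
 Int f.
Proof.
move=> HX HG Hf; rewrite (funext Hf); solve_int.
Qed.

Lemma cov_nonneg (R : realType) (X G : R -> R) : L2_01 X -> L2_01 G ->
  (forall x y, @I01 R x -> @I01 R y -> x <= y -> X x <= X y) ->
  (forall x y, @I01 R x -> @I01 R y -> x <= y -> G x <= G y) -> 0 <= covU X G.
Proof.
move=> HX HG mX mG.
set m := EU G.
have key c : covU X G = EU (fun u => (X u - c) * (G u - m)).
  rewrite /covU -/m.
  rewrite (@EU6' _ X G (fun u => (X u - EU X) * (G u - m)) (EU X * m) (- m) (- EU X) 0 1 0) //; last by move=> u; ring.
  rewrite (@EU6' _ X G (fun u => (X u - c) * (G u - m)) (c * m) (- m) (- c) 0 1 0) //; last by move=> u; ring.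
  rewrite -/m; ring.
have Int_c c : Int (fun u => (X u - c) * (G u - m)).
  by apply: (@Int6 _ X G _ (c * m) (- m) (- c) 0 1 0) => // u; ring.
have [[a [Ia Ga]] | nA] := pselect (exists a, @I01 R a /\ G a < m).
  have [[b [Ib Gb]] | nB] := pselect (exists b, @I01 R b /\ m < G b).
    pose S := X @` [set u | @I01 R u /\ G u < m].
    have ubS v : @I01 R v -> m < G v -> ubound S (X v).
      move=> Iv Gv _ [u [Iu Gu] <-]; apply: mX => //.
      rewrite leNgt; apply/negP => vu.
      have := mG _ _ Iv Iu (ltW vu); lra.
    have Sne : S !=set0 by exists (X a), a.
    have hS : has_ubound S by exists (X b); exact: ubS.
    rewrite (key (sup S)); apply: Rintegral_ge0 => u Iu.
    case: (ltgtP (G u) m) => Hu.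
    - have : X u <= sup S by apply: ub_le_sup => //; exists u.
      nra.
    - have : sup S <= X u by apply: ge_sup => //; exact: ubS.
      nra.
    - by rewrite Hu subrr mulr0.
  have Hae : {ae @lebesgue_measure R, forall x, @I01 R x -> m - G x = 0}.
    apply: ae0.
    - by apply: (@Int6 _ X G _ m 0 (-1) 0 0 0) => // u; ring.
    - move=> x Ix; rewrite subr_ge0; apply: contrapT => /negP; rewrite -ltNge => H.
      by apply: nB; exists x.
    - rewrite (@EU6' _ X G (fun u => m - G u) m 0 (-1) 0 0 0) //; last by move=> u; ring.
      rewrite -/m; ring.
  rewrite (key (EU X)) (@EU_ae _ _ (fun _ => 0)) ?EU_cst //; first exact: Int_cst.
  have FF := ae_filter_ringOfSetsType (@lebesgue_measure R).
  apply: filterS Hae => x H Ix; have := H Ix => Hx.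
  have -> : G x - m = 0 by lra.
  by rewrite mulr0.
have Hae : {ae @lebesgue_measure R, forall x, @I01 R x -> G x - m = 0}.
  apply: ae0.
  - by apply: (@Int6 _ X G _ (- m) 0 1 0 0 0) => // u; ring.
  - move=> x Ix; rewrite subr_ge0; apply: contrapT => /negP; rewrite -ltNge => H.
    by apply: nA; exists x.
  - rewrite (@EU6' _ X G (fun u => G u - m) (- m) 0 1 0 0 0) //; last by move=> u; ring.
    rewrite -/m; ring.
rewrite (key (EU X)) (@EU_ae _ _ (fun _ => 0)) ?EU_cst //; first exact: Int_cst.
have FF := ae_filter_ringOfSetsType (@lebesgue_measure R).
apply: filterS Hae => x H Ix; have := H Ix => Hx.
by rewrite Hx mulr0.
Qed.

Lemma var_pos (R : realType) (G : R -> R) : L2_01 G -> EU G = 1 ->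
  ~ {ae @lebesgue_measure R, forall x, @I01 R x -> G x = 1} -> 0 < varU G.
Proof.
move=> HG E1 nae.
have v0 : 0 <= varU G by apply: Rintegral_ge0 => x _; exact: sqr_ge0.
rewrite lt_neqAle v0 andbT; apply/negP => /eqP V0.
apply: nae.
have Hae : {ae @lebesgue_measure R, forall x, @I01 R x -> (G x - EU G) ^+ 2 = 0}.
  apply: ae0.
  - by apply: (@Int6 _ G G _ (EU G ^+ 2) 0 (- 2 * EU G) 0 0 1) => // u; ring.
  - by move=> x _; exact: sqr_ge0.
  - by rewrite V0.
have FF := ae_filter_ringOfSetsType (@lebesgue_measure R).
apply: filterS Hae => x H Ix; have := H Ix; rewrite E1.
move/eqP; rewrite sqrf_eq0 subr_eq0 => /eqP //.
Qed.

Section Moments.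
Variables (R : realType) (X G : R -> R).
Hypotheses (HX : L2_01 X) (HG : L2_01 G).
Let mX := EU X.
Let mG := EU G.
Let xx := EU (fun u => X u * X u).
Let xg := EU (fun u => X u * G u).
Let gg := EU (fun u => G u * G u).

Lemma EY lam : EU (fun v => G v + lam * X v) = mG + lam * mX.
Proof.
rewrite (@EU6' _ X G (fun v => G v + lam * X v) 0 lam 1 0 0 0) //; last by move=> u; ring.
rewrite /mX /mG; ring.
Qed.

Lemma varY lam : varU (fun v => G v + lam * X v) =
  (gg - mG ^+ 2) + 2 * lam * (xg - mX * mG) + lam ^+ 2 * (xx - mX ^+ 2).
Proof.
rewrite /varU EY.
set e := mG + lam * mX.
rewrite (@EU6' _ X G (fun u => (G u + lam * X u - e) ^+ 2) (e ^+ 2) (- 2 * e * lam) (- 2 * e)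
   (lam ^+ 2) (2 * lam) 1) //; last by move=> u; ring.
rewrite /e /mX /mG /xx /xg /gg; ring.
Qed.

Lemma varX : varU X = xx - mX ^+ 2.
Proof.
rewrite /varU (@EU6' _ X G (fun u => (X u - EU X) ^+ 2) (EU X ^+ 2) (- 2 * EU X) 0 1 0 0) //;
  last by move=> u; ring.
rewrite /mX /xx; ring.
Qed.

Lemma varG : varU G = gg - mG ^+ 2.
Proof.
rewrite /varU (@EU6' _ X G (fun u => (G u - EU G) ^+ 2) (EU G ^+ 2) 0 (- 2 * EU G) 0 0 1) //;
  last by move=> u; ring.
rewrite /mG /gg; ring.
Qed.

Lemma covXG : covU X G = xg - mX * mG.
Proof.
rewrite /covU (@EU6' _ X G (fun u => (X u - EU X) * (G u - EU G)) (EU X * EU G) (- EU G) (- EU X) 0 1 0) //;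
  last by move=> u; ring.
rewrite /mX /mG /xg; ring.
Qed.

Lemma dW2 mu sigma lam : dW X (h_lam G X mu sigma lam) ^+ 2 =
  let a := mG + lam * mX in
  let b := stdU (fun v => G v + lam * X v) in
  let p := - mu + sigma * a / b in
  let q := 1 - sigma * lam / b in
  let r := - sigma / b in
  p ^+ 2 + 2 * p * q * mX + 2 * p * r * mG + q ^+ 2 * xx + 2 * q * r * xg + r ^+ 2 * gg.
Proof.
rewrite /dW sqr_sqrtr; last by apply: Rintegral_ge0 => x _; exact: sqr_ge0.
rewrite /h_lam /= EY.
set a := mG + lam * mX.
set b := stdU _.
rewrite (@EU6' _ X G _ ((- mu + sigma * a / b) ^+ 2)
   (2 * (- mu + sigma * a / b) * (1 - sigma * lam / b))
   (2 * (- mu + sigma * a / b) * (- sigma / b))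
   ((1 - sigma * lam / b) ^+ 2)
   (2 * (1 - sigma * lam / b) * (- sigma / b))
   ((- sigma / b) ^+ 2)) //; last by move=> u; ring.
Qed.
End Moments.

Lemma dW_formula (R : realType) (X G : R -> R) (mu sigma lam : R) : L2_01 X -> L2_01 G ->
  0 < varU (fun v => G v + lam * X v) ->
  dW X (h_lam G X mu sigma lam) ^+ 2 = (EU X - mu) ^+ 2 + varU X + sigma ^+ 2
    - 2 * sigma * (covU X G + lam * varU X) / stdU (fun v => G v + lam * X v).
Proof.
move=> HX HG vp.
rewrite (dW2 HX HG) (varX HX HG) (covXG HX HG) /=.
set b := stdU _.
have hb : b ^+ 2 = varU (fun v => G v + lam * X v) by rewrite sqr_sqrtr // ltW.
have bn0 : b != 0 by rewrite sqrtr_eq0 -ltNge.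
rewrite (varY HX HG) in hb.
apply/eqP; rewrite -subr_eq0; apply/eqP.
set gg := EU (fun u => G u * G u) in hb *.
set xg := EU (fun u => X u * G u) in hb *.
set xx := EU (fun u => X u * X u) in hb *.
set mX := EU X in hb *. set mG := EU G in hb *.
transitivity (sigma ^+ 2 * ((gg - mG ^+ 2) + 2 * lam * (xg - mX * mG) + lam ^+ 2 * (xx - mX ^+ 2) - b ^+ 2) / b ^+ 2).
  by field.
by rewrite -hb subrr mulr0 mul0r.
Qed.


Lemma core_alg (R : realType) (sigma sF K V C Delta lam lam0 : R) :
  0 < sigma -> 0 < sF -> 0 <= K -> 0 <= C -> 0 <= lam ->
  0 < V + 2 * lam * C + lam ^+ 2 * sF ^+ 2 ->
  0 < sigma ^+ 2 * sF ^+ 2 - K ^+ 2 -> 0 <= Delta ->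
  Delta = K ^+ 2 * (V * sF ^+ 2 - C ^+ 2) / (sigma ^+ 2 * sF ^+ 2 - K ^+ 2) ->
  lam0 = (Num.sqrt Delta - C) / sF ^+ 2 ->
  (sigma * (C + lam * sF ^+ 2) = K * Num.sqrt (V + 2 * lam * C + lam ^+ 2 * sF ^+ 2)
    <-> lam = lam0).
Proof.
move=> sig0 sF0 K0 C0 l0 bbp den0 Delta0 DeltaE lam0E.
set bb := V + 2 * lam * C + lam ^+ 2 * sF ^+ 2 in bbp *.
set u := C + lam * sF ^+ 2.
pose t := Num.sqrt Delta.
have t2 : t ^+ 2 = Delta by rewrite sqr_sqrtr.
have s2p : 0 < sF ^+ 2 by rewrite exprn_gt0.
have sF2n0 : sF ^+ 2 != 0 by rewrite gt_eqF.
have u0 : 0 <= u by rewrite addr_ge0 // mulr_ge0 // ltW.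
have bbE : bb * sF ^+ 2 = u ^+ 2 - C ^+ 2 + V * sF ^+ 2 by rewrite /bb /u; ring.
have sb2 : Num.sqrt bb ^+ 2 = bb by rewrite sqr_sqrtr // ltW.
have DD : Delta * (sigma ^+ 2 * sF ^+ 2 - K ^+ 2) = K ^+ 2 * (V * sF ^+ 2 - C ^+ 2).
  by rewrite DeltaE divfK // gt_eqF.
have lamE : (lam = lam0) <-> (u = t).
  rewrite lam0E /u -/t; split => [->|<-]; by field; rewrite gt_eqF.
rewrite lamE; split => [H|H].
- have H2 : (sigma * u) ^+ 2 = (K * Num.sqrt bb) ^+ 2 by rewrite H.
  rewrite !exprMn sb2 in H2.
  have H3 : sigma ^+ 2 * u ^+ 2 * sF ^+ 2 = K ^+ 2 * (u ^+ 2 - C ^+ 2 + V * sF ^+ 2).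
    by rewrite -bbE H2; ring.
  have Hu2 : u ^+ 2 = Delta.
    apply: (@mulIf _ (sigma ^+ 2 * sF ^+ 2 - K ^+ 2)); first by rewrite gt_eqF.
    rewrite DD; lra.
  by rewrite -(ger0_norm u0) -sqrtr_sqr Hu2.
- have H1 : 0 <= sigma * u by rewrite mulr_ge0 // ltW.
  have H2 : 0 <= K * Num.sqrt bb by rewrite mulr_ge0 ?sqrtr_ge0.
  rewrite -(ger0_norm H1) -(ger0_norm H2) -!sqrtr_sqr; congr Num.sqrt.
  rewrite !exprMn sb2 H t2.
  apply: (@mulIf _ (sF ^+ 2)) => //.
  rewrite -[RHS]mulrA bbE H t2.
  have : Delta * (sigma ^+ 2 * sF ^+ 2) = K ^+ 2 * (V * sF ^+ 2 - C ^+ 2) + Delta * K ^+ 2.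
    by rewrite -DD; ring.
  lra.
Qed.

Lemma dist_alg (R : realType) (sigma K eps A sF C lam b : R) : 0 < b ->
  2 * K = A + sF ^+ 2 + sigma ^+ 2 - eps ->
  (A + sF ^+ 2 + sigma ^+ 2 - 2 * sigma * (C + lam * sF ^+ 2) / b = eps <->
   sigma * (C + lam * sF ^+ 2) = K * b).
Proof.
move=> b0 Kd.
have e : 2 * sigma * (C + lam * sF ^+ 2) / b = 2 * (sigma * (C + lam * sF ^+ 2) / b) by ring.
rewrite e; split => H.
- have H' : sigma * (C + lam * sF ^+ 2) / b = K by lra.
  by rewrite -H' divfK // gt_eqF.
- have H' : sigma * (C + lam * sF ^+ 2) / b = K by rewrite H mulfK // gt_eqF.
  lra.
Qed.

Unset Implicit Arguments.

Theorem lemmaB3 (R : realType) (F gamma : R -> R) (mu sigma eps : R) :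
  is_distribution_function F ->
  L2_01 (quantile F) ->
  0 < stdU (quantile F) ->
  (forall x y, I01 x -> I01 y -> x <= y -> gamma x <= gamma y) ->
  L2_01 gamma ->
  EU gamma = 1 ->
  ~ {ae @lebesgue_measure R, forall x, I01 x -> gamma x = 1} ->
  0 < sigma ->
  corrU (quantile F) gamma < 1 ->
  let muF := EU (quantile F) in
  let sigF := stdU (quantile F) in
  let c0 := corrU (quantile F) gamma in
  (muF - mu) ^+ 2 + (sigF - sigma) ^+ 2 < eps ->
  eps <= (muF - mu) ^+ 2 + (sigF - sigma) ^+ 2 + 2 * sigma * sigF * (1 - c0) ->
  let K := (muF ^+ 2 + sigF ^+ 2 + mu ^+ 2 + sigma ^+ 2 - 2 * mu * muF - eps) / 2 in
  let V := varU gamma in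
  let C := covU (quantile F) gamma in
  let Delta := K ^+ 2 * (C ^+ 2 - V * sigF ^+ 2) / (K ^+ 2 - sigma ^+ 2 * sigF ^+ 2) in
  let lam0 := (Num.sqrt Delta - C) / sigF ^+ 2 in
  [/\ 0 <= K, 0 <= Delta,
      0 <= lam0 /\ dW (quantile F) (h_lam gamma (quantile F) mu sigma lam0) ^+ 2 = eps &
      forall lam, 0 <= lam ->
        dW (quantile F) (h_lam gamma (quantile F) mu sigma lam) ^+ 2 = eps ->
        lam = lam0].
Proof.
move=> HF HX sX0 mGm HG EG1 nae sig0 c01 muF sigF c0 Hlow Hup K V C Delta lam0.
have C0 : 0 <= C := cov_nonneg HX HG (quantile_mono HF) mGm.
have V0 : 0 < V := var_pos HG EG1 nae.
have vX0 : 0 <= varU (quantile F) by apply: Rintegral_ge0 => x _; exact: sqr_ge0.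
have sF2 : sigF ^+ 2 = varU (quantile F) by rewrite /sigF /stdU (sqr_sqrtr vX0).
pose w := stdU gamma.
have w2 : w ^+ 2 = V := sqr_sqrtr (ltW V0).
have w0 : 0 < w by rewrite /w /stdU sqrtr_gt0; exact: V0.
have sF0 : 0 < sigF := sX0.
have c0E : c0 = C / (sigF * w) := erefl.
have c01' : c0 < 1 := c01.
have KE : K = (muF ^+ 2 + sigF ^+ 2 + mu ^+ 2 + sigma ^+ 2 - 2 * mu * muF - eps) / 2 := erefl.
have DeltaDef : Delta = K ^+ 2 * (C ^+ 2 - V * sigF ^+ 2) / (K ^+ 2 - sigma ^+ 2 * sigF ^+ 2) := erefl.
have lam0E : lam0 = (Num.sqrt Delta - C) / sigF ^+ 2 := erefl.
have VE : V = varU gamma := erefl.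
have CE : C = covU (quantile F) gamma := erefl.
have muFE : muF = EU (quantile F) := erefl.
clearbody muF sigF c0 K V C Delta lam0 w.
have sw0 : 0 < sigF * w by exact: mulr_gt0.
have CsW : C < sigF * w.
  by have := c01'; rewrite c0E (ltr_pdivrMr _ _ sw0) mul1r.
have c0ge : 0 <= c0 by rewrite c0E divr_ge0 // ltW.
have Kc : sigma * sigF * c0 <= K by rewrite KE; nra.
have K0 : 0 <= K by apply: le_trans Kc; rewrite !mulr_ge0 // ltW.
have Klt : K < sigma * sigF by rewrite KE; nra.
have sCw : sigma * C <= K * w.
  move: Kc; rewrite c0E => Kc.
  have -> : sigma * C = sigma * sigF * (C / (sigF * w)) * w.
    by field; rewrite (gt_eqF w0) (gt_eqF sF0).
  by rewrite (ler_pM2r w0).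
have Cs2 : C ^+ 2 < V * sigF ^+ 2.
  by rewrite -w2 -exprMn mulrC ltr_pXn2r // ?nnegrE // mulr_ge0 // ltW.
have den0 : sigma ^+ 2 * sigF ^+ 2 - K ^+ 2 > 0.
  by rewrite subr_gt0 -exprMn ltr_pXn2r // ?nnegrE // mulr_ge0 // ltW.
have DeltaE : Delta = K ^+ 2 * (V * sigF ^+ 2 - C ^+ 2) / (sigma ^+ 2 * sigF ^+ 2 - K ^+ 2).
  have den1 : K ^+ 2 - sigma ^+ 2 * sigF ^+ 2 < 0 by rewrite -opprB oppr_lt0.
  rewrite DeltaDef; field.
  by rewrite exprMn (gt_eqF den0) (lt_eqF den1).
have Delta0 : 0 <= Delta.
  rewrite DeltaE; apply: divr_ge0; last exact: ltW den0.
  by apply: mulr_ge0; [exact: sqr_ge0 | rewrite subr_ge0; exact: ltW Cs2].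
have DeltaC : C ^+ 2 <= Delta.
  rewrite DeltaE ler_pdivlMr //.
  have : (sigma * C) ^+ 2 <= (K * w) ^+ 2.
    by rewrite ler_pXn2r // ?nnegrE ?mulr_ge0 // ltW.
  rewrite !exprMn w2 => H.
  have s2p : 0 < sigF ^+ 2 by rewrite exprn_gt0.
  nra.
pose t := Num.sqrt Delta.
have t2 : t ^+ 2 = Delta by rewrite sqr_sqrtr.
have Ct : C <= t.
  by rewrite -(ger0_norm C0) -sqrtr_sqr ler_sqrt.
have lam0ge : 0 <= lam0.
  by rewrite lam0E; apply: divr_ge0; [rewrite subr_ge0 | exact: sqr_ge0].
have vY lam : varU (fun v => gamma v + lam * quantile F v) =
    V + 2 * lam * C + lam ^+ 2 * sigF ^+ 2.
  by rewrite (varY HX HG) VE (varG HX HG) CE (covXG HX HG) sF2 (varX HX HG).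
have vYp lam : 0 <= lam -> 0 < V + 2 * lam * C + lam ^+ 2 * sigF ^+ 2.
  move=> l0.
  have h1 : 0 <= 2 * lam * C by rewrite !mulr_ge0.
  have h2 : 0 <= lam ^+ 2 * sigF ^+ 2 by rewrite mulr_ge0 ?sqr_ge0.
  lra.
have dist lam : 0 <= lam -> dW (quantile F) (h_lam gamma (quantile F) mu sigma lam) ^+ 2 =
    (muF - mu) ^+ 2 + sigF ^+ 2 + sigma ^+ 2 -
    2 * sigma * (C + lam * sigF ^+ 2) / Num.sqrt (V + 2 * lam * C + lam ^+ 2 * sigF ^+ 2).
  move=> l0; rewrite dW_formula ?vY ?vYp // -sF2 -CE -muFE.
  by rewrite /stdU vY.
have Kd : 2 * K = (muF - mu) ^+ 2 + sigF ^+ 2 + sigma ^+ 2 - eps by rewrite KE; field.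
have key lam : 0 <= lam ->
  (dW (quantile F) (h_lam gamma (quantile F) mu sigma lam) ^+ 2 = eps <-> lam = lam0).
  move=> l0; rewrite dist //.
  have bp : 0 < Num.sqrt (V + 2 * lam * C + lam ^+ 2 * sigF ^+ 2) by rewrite sqrtr_gt0 vYp.
  apply: (iff_trans (@dist_alg _ sigma K eps _ sigF C lam _ bp Kd)).
  exact: (core_alg sig0 sF0 K0 C0 l0 (vYp _ l0) den0 Delta0 DeltaE lam0E).
split => //.
- split => //; exact/(key _ lam0ge).
- by move=> lam l0 /(key _ l0).
Qed.
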